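(* A ring $R$ is left noetherian if and only if every left $R$-module is strict ${}_R\sharp$-atomic. In particular, every abelian group is strict $\sharp$-atomic over $\mathbb Z$.
   Context: Modules are left $R$-modules. ${}_R\sharp$ denotes the class of absolutely pure (FP-injective) left $R$-modules. pp formulas and $\phi(M)$ as usual. For a class $\mathcal L$, $(M,\bar m)$ is an $\mathcal L$-free realization of a pp formula $\phi$ if $\bar m\in\phi(M)$ and for every $L\in\mathcal L$ and $\bar c\in\phi(L)$ there is a homomorphism $M\to L$ sending $\bar m$ to $\bar c$; $M$ is strict $\mathcal L$-atomic if every finite tuple in $M$ is an $\mathcal L$-free realization of some pp formula. *)

(* Defs.v *)
From HB Require Import structures.
From mathcomp Require Import all_boot all_order all_algebra.
Set Implicit Arguments. Unset Strict Implicit. Unset Printing Implicit Defensive.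
Import GRing.Theory.
Local Open Scope ring_scope.

Definition left_ideal (R : pzRingType) (I : R -> Prop) : Prop :=
  [/\ I 0, (forall x y, I x -> I y -> I (x + y)) & (forall r x, I x -> I (r * x))].

Definition left_noetherian (R : pzRingType) : Prop :=
  forall I : R -> Prop, left_ideal I ->
    exists n (g : 'I_n -> R), (forall i, I (g i)) /\
      (forall x, I x <-> exists c : 'I_n -> R, x = \sum_(i < n) c i * g i).

(* A pp formula in n free variables x_0..x_{n-1}:
   exists y_0..y_{k-1}, /\_{i<m} (sum_j A i j x_j + sum_l B i l y_l = 0). *)
Record ppf (R : pzRingType) (n : nat) := PPF {
  pp_k : nat;
  pp_m : nat;
  pp_A : 'I_pp_m -> 'I_n -> R;
  pp_B : 'I_pp_m -> 'I_pp_k -> R }.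
Arguments pp_k {R n} p.
Arguments pp_m {R n} p.
Arguments pp_A {R n} p _ _.
Arguments pp_B {R n} p _ _.

Definition pp_holds (R : pzRingType) (n : nat) (phi : ppf R n)
    (M : lmodType R) (x : 'I_n -> M) : Prop :=
  exists y : 'I_(pp_k phi) -> M, forall i : 'I_(pp_m phi),
    \sum_(j < n) pp_A phi i j *: x j + \sum_(l < pp_k phi) pp_B phi i l *: y l = 0.

Definition abs_pure (R : pzRingType) (M : lmodType R) : Prop :=
  forall (N : lmodType R) (e : {linear M -> N}), injective e ->
    forall n (phi : ppf R n) (x : 'I_n -> M),
      pp_holds phi (fun j => e (x j)) -> pp_holds phi x.

Definition free_realization (R : pzRingType) (C : lmodType R -> Prop)
    (n : nat) (phi : ppf R n) (M : lmodType R) (x : 'I_n -> M) : Prop :=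
  pp_holds phi x /\
  forall (L : lmodType R), C L -> forall c : 'I_n -> L, pp_holds phi c ->
    exists f : {linear M -> L}, forall j, f (x j) = c j.

Definition strict_atomic (R : pzRingType) (C : lmodType R -> Prop)
    (M : lmodType R) : Prop :=
  forall n (x : 'I_n -> M), exists phi : ppf R n, free_realization C phi x.

(* Main.v *)
Require Import Defs.
From HB Require Import structures.
From mathcomp Require Import all_boot all_order all_algebra.
From mathcomp Require Import boolp classical_sets functions.
From mathcomp Require Import ring lra.
Import Order.TTheory GRing.Theory Num.Theory.
Local Open Scope ring_scope.
Unset Printing Implicit Defensive.

Definition fracq (q : rat) : rat := q - (Num.floor q)%:~R.

Lemma fracqDz q n : fracq (q + n%:~R) = fracq q.
Proof.
rewrite /fracq floorDrz ?intr_int // intrKfloor intrD; lra.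
Qed.

Lemma floor_fracq q : Num.floor (fracq q) = 0.
Proof. by rewrite /fracq -intrN floorDrz ?intr_int // intrKfloor subrr. Qed.

Lemma fracq_id q : Num.floor q = 0 -> fracq q = q.
Proof. by rewrite /fracq => ->; rewrite subr0. Qed.

Lemma fracq_fracq a b : fracq (fracq a + b) = fracq (a + b).
Proof. by rewrite [fracq a]/fracq addrAC -intrN fracqDz. Qed.

Lemma fracq_eq0 q : fracq q = 0 <-> q \is a Num.int.
Proof.
rewrite intrEfloor /fracq; split; first by move/eqP; rewrite subr_eq0 eq_sym.
by move/eqP->; rewrite subrr.
Qed.

Record QZ := MkQZ { qz : rat; qzP : Num.floor qz = 0 }.
HB.instance Definition _ := gen_eqMixin QZ.
HB.instance Definition _ := gen_choiceMixin QZ.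

Lemma QZ_ext x y : qz x = qz y -> x = y.
Proof.
case: x => a Ha; case: y => b Hb /= Eab; subst b.
by rewrite (Prop_irrelevance Ha Hb).
Qed.

Definition piq q := MkQZ (fracq q) (floor_fracq q).

Lemma qzK x : piq (qz x) = x.
Proof. by apply: QZ_ext => /=; rewrite fracq_id // qzP. Qed.

Lemma piq_eq a b : piq a = piq b <-> fracq a = fracq b.
Proof. by split=> [/(congr1 qz)//|E]; apply: QZ_ext. Qed.

Definition qzadd x y := piq (qz x + qz y).
Definition qzopp x := piq (- qz x).
Definition qzzero := piq 0.

Lemma qzaddE a b : qzadd (piq a) (piq b) = piq (a + b).
Proof.
apply/piq_eq => /=; rewrite fracq_fracq addrC fracq_fracq addrC //.
Qed.

Lemma qzoppE a : qzopp (piq a) = piq (- a).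
Proof.
by apply/piq_eq => /=; rewrite [fracq a]/fracq opprB addrC fracqDz.
Qed.

Lemma qz_elim (P : QZ -> Prop) : (forall a, P (piq a)) -> forall x, P x.
Proof. by move=> H x; rewrite -(qzK x). Qed.

Lemma qzaddA : associative qzadd.
Proof.
elim/qz_elim=> a; elim/qz_elim=> b; elim/qz_elim=> c.
by rewrite !qzaddE addrA.
Qed.
Lemma qzaddC : commutative qzadd.
Proof. by elim/qz_elim=> a; elim/qz_elim=> b; rewrite !qzaddE addrC. Qed.
Lemma qzadd0 : left_id qzzero qzadd.
Proof. by elim/qz_elim=> a; rewrite qzaddE add0r. Qed.
Lemma qzaddN : left_inverse qzzero qzopp qzadd.
Proof. by elim/qz_elim=> a; rewrite qzoppE qzaddE addNr. Qed.

HB.instance Definition _ := GRing.isZmodule.Build QZ qzaddA qzaddC qzadd0 qzaddN.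

Lemma piqD a b : piq (a + b) = piq a + piq b.
Proof. by rewrite -qzaddE. Qed.
Lemma piq0 : piq 0 = 0. Proof. by []. Qed.
Lemma piqN a : piq (- a) = - piq a.
Proof. by rewrite -qzoppE. Qed.

Lemma piq_morph : zmod_morphism piq.
Proof. by move=> a b; rewrite piqD piqN. Qed.
HB.instance Definition _ := GRing.isZmodMorphism.Build rat QZ piq piq_morph.

Lemma piq_eq0 q : piq q = 0 <-> q \is a Num.int.
Proof.
rewrite -fracq_eq0 -piq0; split; first by move/piq_eq; rewrite /fracq floor0 subr0.
by move=> H; apply/piq_eq; rewrite H /fracq floor0 subr0.
Qed.

Lemma qz_div (x : QZ) (n : nat) : (0 < n)%N -> exists e : QZ, e *+ n = x.
Proof.
move=> n0; exists (piq (qz x / n%:R)).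
rewrite -raddfMn /=.
have -> : qz x / n%:R *+ n = qz x.
  by rewrite -mulr_natr divfK // pnatr_eq0 -lt0n.
exact: qzK.
Qed.
Set Implicit Arguments. Unset Strict Implicit.

Definition submod (S : pzRingType) (M : lmodType S) (P : M -> Prop) :=
  P 0 /\ forall a x y, P x -> P y -> P (a *: x + y).
Definition linon (S : pzRingType) (M L : lmodType S) (P : M -> Prop) (f : M -> L) :=
  forall a x y, P x -> P y -> f (a *: x + y) = a *: f x + f y.
Definition baer (S : pzRingType) (L : lmodType S) :=
  forall (I : S -> Prop) (h : S -> L), I 0 ->
    (forall a b, I a -> I b -> I (a + b)) -> (forall r a, I a -> I (r * a)) ->
    (forall a b, I a -> I b -> h (a + b) = h a + h b) ->
    (forall r a, I a -> h (r * a) = r *: h a) ->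
    exists e, forall a, I a -> h a = a *: e.

Section SubmodFacts.
Variables (S : pzRingType) (M L : lmodType S) (P : M -> Prop) (f : M -> L).
Hypothesis (HP : submod P) (Hf : linon P f).

Lemma sm0 : P 0. Proof. by case: HP. Qed.
Lemma smD x y : P x -> P y -> P (x + y).
Proof. by move=> Px Py; have := HP.2 1 x y Px Py; rewrite scale1r. Qed.
Lemma smZ a x : P x -> P (a *: x).
Proof. by move=> Px; have := HP.2 a x 0 Px sm0; rewrite addr0. Qed.
Lemma smN x : P x -> P (- x).
Proof. by move=> Px; rewrite -scaleN1r; apply: smZ. Qed.
Lemma smB x y : P x -> P y -> P (x - y).
Proof. by move=> Px Py; apply: smD => //; apply: smN. Qed.
Lemma lo0 : f 0 = 0.
Proof.
have := Hf 1 sm0 sm0; rewrite !scale1r addr0 => H.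
by apply: (addrI (f 0)); rewrite addr0 -H.
Qed.
Lemma loD x y : P x -> P y -> f (x + y) = f x + f y.
Proof. by move=> Px Py; have := Hf 1 Px Py; rewrite !scale1r. Qed.
Lemma loZ a x : P x -> f (a *: x) = a *: f x.
Proof. by move=> Px; have := Hf a Px sm0; rewrite !addr0 lo0 addr0. Qed.
Lemma loN x : P x -> f (- x) = - f x.
Proof. by move=> Px; rewrite -scaleN1r loZ // scaleN1r. Qed.
Lemma loB x y : P x -> P y -> f (x - y) = f x - f y.
Proof. by move=> Px Py; rewrite loD ?loN //; apply: smN. Qed.
End SubmodFacts.

Section Step.
Variables (S : pzRingType) (M L : lmodType S) (P : M -> Prop) (f : M -> L).
Hypothesis (HP : submod P) (Hf : linon P f).
Variables (x : M) (e : L).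
Hypothesis He : forall a, P (a *: x) -> f (a *: x) = a *: e.

Definition stepP (v : M) := exists pa : M * S, P pa.1 /\ v = pa.1 + pa.2 *: x.
Definition stepf (v : M) : L :=
  match pselect (stepP v) with
  | left H => let pa := proj1_sig (cid H) in f pa.1 + pa.2 *: e
  | right _ => 0 end.

Lemma step_wd p a p' a' : P p -> P p' -> p + a *: x = p' + a' *: x ->
  f p + a *: e = f p' + a' *: e.
Proof.
move=> Pp Pp' E.
have E2 : (a - a') *: x = p' - p.
  have Ea : a *: x = p' + a' *: x - p by rewrite -E addrC addKr.
  by rewrite scalerBl Ea addrAC addrK.
have : P ((a - a') *: x) by rewrite E2; apply: (smB HP).
move/He; rewrite E2 (loB HP Hf) // => E3.
rewrite scalerBl in E3.
rewrite (_ : a *: e = f p' - f p + a' *: e); last by rewrite E3 subrK.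
by rewrite addrA (addrC (f p)) subrK.
Qed.

Lemma stepfE p a : P p -> stepf (p + a *: x) = f p + a *: e.
Proof.
move=> Pp; rewrite /stepf; case: pselect => [H|[]]; last by exists (p, a).
by case: (cid H) => [[q b] /= [Pq E]]; apply: step_wd => //; rewrite E.
Qed.

Lemma step_submod : submod stepP.
Proof.
split; first by exists (0, 0); rewrite /= scale0r addr0; split=> //; apply: (sm0 HP).
move=> b v w [[p a] /= [Pp ->]] [[q c] /= [Pq ->]].
exists (b *: p + q, b * a + c) => /=; split; first by apply HP.
by rewrite scalerDr scalerDl scalerA; rewrite addrACA.
Qed.

Lemma step_linon : linon stepP stepf.
Proof.
move=> b v w [[p a] /= [Pp ->]] [[q c] /= [Pq ->]].
have -> : b *: (p + a *: x) + (q + c *: x) = (b *: p + q) + (b * a + c) *: x.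
  by rewrite scalerDr scalerDl scalerA addrACA.
rewrite !stepfE //; last by apply HP.
rewrite Hf // scalerDr scalerDl scalerA.
by rewrite addrACA.
Qed.

Lemma step_ext v : P v -> stepP v /\ stepf v = f v.
Proof.
move=> Pv; have E : v = v + 0 *: x by rewrite scale0r addr0.
split; first by exists (v, 0).
by rewrite {1}E stepfE // scale0r !addr0.
Qed.

Lemma step_x : stepP x /\ stepf x = e.
Proof.
have E : x = 0 + 1 *: x by rewrite scale1r add0r.
split; first by exists (0, 1); split => //; apply: (sm0 HP).
rewrite {1}E stepfE; last exact: (sm0 HP).
have H0 := lo0 HP Hf. rewrite scale1r. have -> : f 0 = 0 by exact: H0. by rewrite add0r.
Qed.
End Step.

Section ZornExt.
Variables (S : pzRingType) (M L : lmodType S) (P0 : M -> Prop) (f0 : M -> L).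
Hypothesis (HP0 : submod P0) (Hf0 : linon P0 f0).

Definition extd (p q : (M -> Prop) * (M -> L)) :=
  (forall v, p.1 v -> q.1 v) /\ (forall v, p.1 v -> q.2 v = p.2 v).

Definition adm (p : (M -> Prop) * (M -> L)) :=
  [/\ submod p.1, linon p.1 p.2 & extd (P0, f0) p].

Definition ZT := {p | adm p}.
Definition ZR : rel ZT := fun s t => asbool (extd (proj1_sig s) (proj1_sig t)).

Lemma extd_refl p : extd p p. Proof. by split. Qed.
Lemma extd_trans p q r : extd p q -> extd q r -> extd p r.
Proof.
move=> [pq1 pq2] [qr1 qr2]; split=> v pv; first by apply/qr1/pq1.
by rewrite qr2 ?pq2 //; apply: pq1.
Qed.

Definition zt0 : ZT := exist _ (P0, f0) (And3 HP0 Hf0 (extd_refl _)).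

Section Chain.
Variable A : set ZT.
Hypothesis Atot : total_on A ZR.
Variable s0 : ZT.
Hypothesis As0 : A s0.

Definition UP (v : M) := exists s, A s /\ (proj1_sig s).1 v.
Definition Uf (v : M) : L :=
  match pselect (UP v) with
  | left H => (proj1_sig (proj1_sig (cid H))).2 v
  | right _ => 0 end.

Lemma tot s t : A s -> A t -> extd (proj1_sig s) (proj1_sig t) \/ extd (proj1_sig t) (proj1_sig s).
Proof. by move=> As At; case: (Atot As At) => /asboolP; [left|right]. Qed.

Lemma UfE s v : A s -> (proj1_sig s).1 v -> Uf v = (proj1_sig s).2 v.
Proof.
move=> As sv; rewrite /Uf; case: pselect => [H|[]]; last by exists s.
case: (cid H) => t [At tv] /=.
by case: (tot As At) => [[_ ->]|[_ ->]].
Qed.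

Lemma U2 v w : UP v -> UP w -> exists s, [/\ A s, (proj1_sig s).1 v & (proj1_sig s).1 w].
Proof.
move=> [s [As sv]] [t [At tw]].
case: (tot As At) => [[st _]|[ts _]]; first by exists t; split=> //; apply: st.
by exists s; split=> //; apply: ts.
Qed.

Lemma U_adm : adm (UP, Uf).
Proof.
split => /=.
- split; first by exists s0; split=> //; case: (proj2_sig s0) => [[]].
  move=> a v w Uv Uw; have [s [As sv sw]] := U2 Uv Uw.
  by exists s; split=> //; case: (proj2_sig s) => [[_ H] _ _]; apply: H.
- move=> a v w Uv Uw; have [s [As sv sw]] := U2 Uv Uw.
  case: (proj2_sig s) => [[H0 H] Hl _].
  by rewrite !(UfE As) //; [apply: Hl | apply: H].
- split=> /= v P0v; first by exists s0; split=> //; case: (proj2_sig s0) => [_ _ [H _]]; apply: H.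
  rewrite (UfE As0); first by case: (proj2_sig s0) => [_ _ [_ H]]; apply: H.
  by case: (proj2_sig s0) => [_ _ [H _]]; apply: H.
Qed.

Lemma U_ub s : A s -> extd (proj1_sig s) (UP, Uf).
Proof. by move=> As; split=> v sv /=; [exists s | rewrite (UfE As)]. Qed.
End Chain.

Hypothesis step : forall P f x, submod P -> linon P f -> ~ P x ->
  exists P' f', [/\ submod P', linon P' f', extd (P, f) (P', f') & P' x].

Lemma zorn_ext : exists f : M -> L,
  (forall a x y, f (a *: x + y) = a *: f x + f y) /\ (forall v, P0 v -> f v = f0 v).
Proof.
have chain : forall A, total_on A ZR -> exists t, forall s, A s -> ZR s t.
  move=> A Atot.
  have [[s0 As0]|nA] := pselect (exists s, A s).
    exists (exist _ (UP A, Uf A) (U_adm Atot As0)) => s As.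
    by apply: asboolT; apply: U_ub.
  by exists zt0 => s As; case: nA; exists s.
have [t tmax] := @ZL_preorder ZT zt0 ZR
  (fun t => asboolT (extd_refl _))
  (fun r s t rs st => asboolT (extd_trans (asboolW rs) (asboolW st))) chain.
case: t tmax => [[P f] [HP Hf Hext]] /= tmax.
have allP : forall x, P x.
  move=> x; apply: contrapT => nPx.
  have [P' [f' [HP' Hf' E' P'x]]] := step HP Hf nPx.
  have ad : adm (P', f') by split=> //; apply: extd_trans Hext E'.
  have := tmax (exist _ (P', f') ad) (asboolT E').
  by move/asboolW => [/= H _]; apply: nPx; apply: H.
exists f; split; first by move=> a x y; apply: (Hf a); apply: allP.
by case: (Hext) => /= _ H v P0v; apply: H.
Qed.
End ZornExt.

Lemma rext (S : pzRingType) (M L : lmodType S) (HL : baer L)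
  (P0 : M -> Prop) (f0 : M -> L) : submod P0 -> linon P0 f0 ->
  exists f : M -> L,
  (forall a x y, f (a *: x + y) = a *: f x + f y) /\ (forall v, P0 v -> f v = f0 v).
Proof.
move=> HP0 Hf0; apply: zorn_ext => // P f x HP Hf nPx.
have [e He] : exists e, forall a, P (a *: x) -> f (a *: x) = a *: e.
  apply: (HL (fun a => P (a *: x)) (fun a => f (a *: x))).
  - by rewrite scale0r; apply: (sm0 HP).
  - by move=> a b Pa Pb; rewrite scalerDl; apply: (smD HP).
  - by move=> r a Pa; rewrite -scalerA; apply: (smZ HP).
  - by move=> a b Pa Pb; rewrite scalerDl (loD Hf).
  - by move=> r a Pa; rewrite -scalerA (loZ HP Hf).
exists (stepP P x), (stepf P f x e); split.
- exact: step_submod.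
- exact: step_linon.
- by split=> v Pv; have [] := step_ext HP Hf He Pv.
- by have [] := step_x HP Hf He.
Qed.

Section MkLin.
Variables (S : pzRingType) (M L : lmodType S) (f : M -> L).
Hypothesis H : forall a x y, f (a *: x + y) = a *: f x + f y.
Definition mklin : M -> L := f.
HB.instance Definition _ := GRing.isLinear.Build S M L *:%R mklin H.
Definition mklinL : {linear M -> L} := mklin.
Lemma mklinE x : mklinL x = f x. Proof. by []. Qed.
End MkLin.

Section ZM.
Variable V : zmodType.
Definition zm : Type := V.
HB.instance Definition _ := GRing.Zmodule.on zm.
Let zsc (k : int) (v : zm) : zm := v *~ k.
Let zsA a b v : zsc a (zsc b v) = zsc (a * b) v.
Proof. by rewrite /zsc mulrzA_C. Qed.
Let zs1 : left_id 1 zsc.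
Proof. by move=> v; rewrite /zsc. Qed.
Let zsDr : right_distributive zsc +%R.
Proof. by move=> a u v; rewrite /zsc mulrzDl. Qed.
Let zsDl v : {morph zsc^~ v : a b / a + b}.
Proof. by move=> a b; rewrite /zsc mulrzDr. Qed.
HB.instance Definition _ := GRing.Zmodule_isLmodule.Build int zm zsA zs1 zsDr zsDl.
Lemma zmZ (k : int) (v : zm) : k *: v = (v : V) *~ k. Proof. by []. Qed.
End ZM.

Lemma int_ideal (I : int -> Prop) : I 0 -> (forall a b, I a -> I b -> I (a + b)) ->
  (forall r a, I a -> I (r * a)) ->
  (forall k, I k -> k = 0) \/
  exists o : nat, [/\ (0 < o)%N, I o%:Z & forall k, I k -> exists q, k = q * o%:Z].
Proof.
move=> I0 ID IM.
have [[k [Ik k0]]|] := pselect (exists k, I k /\ k <> 0); last first.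
  by move=> H; left=> k Ik; apply: contrapT => k0; apply: H; exists k.
right.
have Iabs : I (`|k|%N)%:Z.
  rewrite abszE; case: (ger0P k) => _; first by rewrite -(mul1r k); apply: IM.
  by rewrite -mulN1r; apply: IM.
have ex : exists n, (0 < n)%N && asbool (I n%:Z).
  exists `|k|%N; rewrite absz_gt0; apply/andP; split; first by apply/eqP.
  exact: asboolT.
case: (ex_minnP ex) => o /andP [o0 /asboolW Io] omin.
exists o; split=> // m Im.
have o0' : (o%:Z != 0) by rewrite eqz_nat -lt0n.
exists (m %/ o)%Z.
have Imod : I (m %% o)%Z.
  have -> : (m %% o)%Z = m + (- (m %/ o)%Z) * o%:Z.
    by rewrite {2}(divz_eq m o) mulNr addrC addKr.
  by apply: ID => //; apply: IM.
have := modz_ge0 m o0'; have := ltz_mod m o0'.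
case E: ((m %% o)%Z) Imod => [n|n]; last by [].
move=> In no' _; have no : (n < o)%N by []. clear no'.
case: n E In no => [|n] E In no.
  by rewrite {1}(divz_eq m o) E addr0.
have := omin n.+1; rewrite /= asboolT // => /(_ isT).
by rewrite leqNgt no.
Qed.

Lemma zm_mulrz_fun (T : Type) (V : zmodType) (f : T -> V) (k : int) t :
  (f *~ k) t = f t *~ k.
Proof.
have Hn n : (f *+ n) t = f t *+ n.
  by elim: n => [|n IH]; rewrite ?mulr0n // !mulrS -IH.
case: k => n; first by rewrite -!pmulrn Hn.
by rewrite !NegzE !mulrNz -!pmulrn /= -Hn.
Qed.

Lemma int_baer_gen (L : zmodType)
  (div : forall (x : L) (n : nat), (0 < n)%N -> exists e, e *+ n = x) :
  baer (zm L).
Proof.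
move=> I h I0 ID IM hD hM.
have h0 : h 0 = 0.
  by apply: (addrI (h 0)); rewrite -hD // !addr0.
case: (int_ideal I0 ID IM) => [I00|[o [o0 Io oI]]].
  by exists 0 => a Ia; rewrite (I00 a Ia) h0 scaler0.
have [e He] := div (h o%:Z) o o0.
exists e => a Ia; have [q ->] := oI a Ia.
by rewrite hM // !zmZ -He -mulrz_nat mulrzA_C natz.
Qed.

Lemma qz_baer : baer (zm QZ).
Proof. by apply: int_baer_gen => x n n0; apply: qz_div. Qed.

Lemma fun_baer (T : Type) (L : zmodType) : baer (zm L) -> baer (zm (T -> L)).
Proof.
move=> HL I h I0 ID IM hD hM.
have Ht : forall t, exists e : L, forall a, I a -> h a t = a *: (e : zm L).
  move=> t; apply: (HL I (fun a => h a t)) => //.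
  - by move=> a b Ia Ib; rewrite hD.
  - by move=> r a Ia; rewrite hM // !zmZ zm_mulrz_fun.
exists (fun t => proj1_sig (cid (Ht t))) => a Ia.
apply/funext => t; rewrite zmZ zm_mulrz_fun -zmZ.
by case: (cid (Ht t)) => e /= ->.
Qed.

Lemma subgroup_submod (V : zmodType) (W : V -> Prop) :
  W 0 -> (forall x y, W x -> W y -> W (x - y)) -> submod (W : zm V -> Prop).
Proof.
move=> W0 WB.
have WN x : W x -> W (- x) by move=> Wx; rewrite -sub0r; apply: WB.
have WD x y : W x -> W y -> W (x + y).
  by move=> Wx Wy; rewrite -(opprK y); apply: WB => //; apply: WN.
have Wn x n : W x -> W (x *+ n).
  by move=> Wx; elim: n => [|n IH]; rewrite ?mulr0n // mulrS; apply: WD.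
split=> // a x y Wx Wy; rewrite zmZ; apply: WD => //.
case: a => n; first by rewrite -pmulrn; apply: Wn.
by rewrite NegzE mulrNz -pmulrn; apply/WN/Wn.
Qed.

Lemma invn_notint (o : nat) : (1 < o)%N -> ~ ((o%:R : rat)^-1 \is a Num.int).
Proof.
move=> o1; rewrite intrEfloor.
have o0 : (0 : rat) < o%:R by rewrite ltr0n; apply: leq_trans o1.
have -> : Num.floor ((o%:R : rat)^-1) = 0.
  apply: floor_def; rewrite add0r /= invr_ge0 (ltW o0) /= invf_lt1 //.
  by rewrite ltr1n.
by rewrite eq_sym invr_eq0 gt_eqF.
Qed.

Lemma cogen (V : zmodType) (W : V -> Prop) :
  W 0 -> (forall x y, W x -> W y -> W (x - y)) -> forall v, ~ W v ->
  exists chi : V -> QZ, [/\ forall x y, chi (x + y) = chi x + chi y,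
    forall w, W w -> chi w = 0 & chi v <> 0].
Proof.
move=> W0 WB v nWv.
have HW := subgroup_submod W0 WB.
have [d [d0 dI]] : exists d : QZ, d <> 0 /\ forall a : int, W (v *~ a) -> d *~ a = 0.
  have := @int_ideal (fun a => W (v *~ a)).
  case.
  - by rewrite mulr0z.
  - by move=> a b Ia Ib; rewrite mulrzDr; apply: (smD HW).
  - by move=> r a Ia; rewrite -mulrzA_C -zmZ; apply: (smZ HW).
  - move=> I0; exists (piq 2%:R^-1); split.
      by move/piq_eq0; apply: invn_notint.
    by move=> a /I0 ->; rewrite mulr0z.
  - move=> [o [o0 Io oI]].
    have o1 : (1 < o)%N.
      case: o o0 Io {oI} => [|[|o]] // _; by rewrite mulr1z.
    exists (piq o%:R^-1); split; first by move/piq_eq0; apply: invn_notint.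
    move=> a /oI [q ->]; rewrite -raddfMz /=; apply/piq_eq0.
    rewrite -mulrzr.
    have -> : (q * o%:Z)%:~R = q%:~R * (o%:R : rat) by rewrite intrM.
    rewrite mulrCA mulVf ?mulr1 ?intr_int //.
    by rewrite pnatr_eq0 -lt0n; apply: leq_trans o1.
have Hf : linon (W : zm V -> Prop) (fun _ : zm V => 0 : zm QZ).
  by move=> a x y _ _; rewrite scaler0 addr0.
have He : forall a, W (a *: (v : zm V)) -> (fun _ : zm V => 0 : zm QZ) (a *: (v : zm V)) = a *: (d : zm QZ).
  by move=> a; rewrite !zmZ => /dI ->.
have [chi [chiL chiE]] := rext qz_baer (step_submod HW (v : zm V)) (step_linon HW Hf He).
exists chi; split.
- by move=> x y; have := chiL 1 x y; rewrite !scale1r.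
- move=> w Ww; have [Pw Ew] := step_ext HW Hf He Ww.
  by rewrite chiE.
- have [Pv Ev] := step_x HW Hf He.
  by rewrite chiE // Ev.
Qed.

Lemma morph_mulrz (U V : zmodType) (f : U -> V) :
  (forall x y, f (x + y) = f x + f y) -> forall x k, f (x *~ k) = f x *~ k.
Proof.
move=> fD.
have f0 : f 0 = 0 by apply: (addrI (f 0)); rewrite -fD !addr0.
have fN x : f (- x) = - f x.
  by apply: (addrI (f x)); rewrite -fD !subrr.
have fn x n : f (x *+ n) = f x *+ n.
  by elim: n => [|n IH]; rewrite ?mulr0n // !mulrS fD IH.
move=> x [] n; first by rewrite -!pmulrn fn.
by rewrite !NegzE !mulrNz -!pmulrn fN fn.
Qed.

Section Coind.
Variables (R : pzRingType) (V : lmodType R) (W : V -> Prop).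

Record TT := MkT { tchi : V -> QZ;
  tchiD : forall x y, tchi (x + y) = tchi x + tchi y;
  tchiW : forall w, W w -> tchi w = 0 }.

Definition FF := TT -> QZ.

Record NN := MkN { nf : R -> FF; nfD : forall s s', nf (s + s') = nf s + nf s' }.
HB.instance Definition _ := gen_eqMixin NN.
HB.instance Definition _ := gen_choiceMixin NN.

Lemma NN_ext (a b : NN) : nf a = nf b -> a = b.
Proof.
case: a => fa Ha; case: b => fb Hb /= E; subst fb.
by rewrite (Prop_irrelevance Ha Hb).
Qed.

Let nzeroD s s' : (fun _ : R => 0 : FF) (s + s') = (fun _ : R => 0 : FF) s + (fun _ : R => 0 : FF) s'.
Proof. by rewrite addr0. Qed.
Definition nzero := MkN nzeroD.
Let naddD (a b : NN) s s' : (fun s => nf a s + nf b s) (s + s') =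
  (fun s => nf a s + nf b s) s + (fun s => nf a s + nf b s) s'.
Proof. by rewrite /= !nfD addrACA. Qed.
Definition nadd (a b : NN) := MkN (naddD a b).
Let noppD (a : NN) s s' : (fun s => - nf a s) (s + s') =
  (fun s => - nf a s) s + (fun s => - nf a s) s'.
Proof. by rewrite /= nfD opprD. Qed.
Definition nopp (a : NN) := MkN (noppD a).

Let naddA : associative nadd.
Proof. by move=> a b c; apply: NN_ext; apply/funext => s /=; rewrite addrA. Qed.
Let naddC : commutative nadd.
Proof. by move=> a b; apply: NN_ext; apply/funext => s /=; rewrite addrC. Qed.
Let nadd0 : left_id nzero nadd.
Proof. by move=> a; apply: NN_ext; apply/funext => s /=; rewrite add0r. Qed.
Let naddN : left_inverse nzero nopp nadd.
Proof. by move=> a; apply: NN_ext; apply/funext => s /=; rewrite addNr. Qed.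
HB.instance Definition _ := GRing.isZmodule.Build NN naddA naddC nadd0 naddN.

Lemma nf_add (a b : NN) s : nf (a + b) s = nf a s + nf b s. Proof. by []. Qed.
Lemma nf_zero s : nf 0 s = 0. Proof. by []. Qed.
Lemma nf_opp (a : NN) s : nf (- a) s = - nf a s. Proof. by []. Qed.

Let nscD (r : R) (a : NN) s s' : (fun s => nf a (s * r)) (s + s') =
  (fun s => nf a (s * r)) s + (fun s => nf a (s * r)) s'.
Proof. by rewrite /= mulrDl nfD. Qed.
Definition nscale (r : R) (a : NN) := MkN (nscD r a).

Let nsA a b v : nscale a (nscale b v) = nscale (a * b) v.
Proof. by apply: NN_ext; apply/funext => s /=; rewrite mulrA. Qed.
Let ns1 : left_id 1 nscale.
Proof. by move=> v; apply: NN_ext; apply/funext => s /=; rewrite mulr1. Qed.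
Let nsDr : right_distributive nscale +%R.
Proof. by move=> a u v; apply: NN_ext; apply/funext => s /=. Qed.
Let nsDl v : {morph nscale^~ v : a b / a + b}.
Proof. by move=> a b; apply: NN_ext; apply/funext => s /=; rewrite mulrDr nfD. Qed.
HB.instance Definition _ := GRing.Zmodule_isLmodule.Build R NN nsA ns1 nsDr nsDl.

Lemma nf_scale r (a : NN) s : nf (r *: a) s = nf a (s * r). Proof. by []. Qed.

Lemma nf_mulrz (a : NN) k s : nf (a *~ k) s = nf a s *~ k.
Proof. by apply: (morph_mulrz (f := fun a : NN => nf a s)). Qed.

Lemma N_inj (M : lmodType R) (P0 : M -> Prop) (g : M -> NN) :
  submod P0 -> linon P0 g -> exists f : M -> NN,
  (forall a x y, f (a *: x + y) = a *: f x + f y) /\ (forall v, P0 v -> f v = g v).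
Proof.
move=> HP Hg.
pose g' := fun v : zm M => (nf (g v) 1 : zm FF).
have HP' : submod (P0 : zm M -> Prop).
  apply: subgroup_submod; first exact: (sm0 HP).
  by move=> x y Px Py; apply: (smB HP).
have Hg' : linon (P0 : zm M -> Prop) g'.
  move=> k x y Px Py; rewrite /g' !zmZ -!scaler_int (Hg _ _ _ Px Py).
  by rewrite nf_add scaler_int nf_mulrz.
have [G [GL GE]] := rext (fun_baer qz_baer) HP' Hg'.
have GD : forall x y, G (x + y) = G x + G y.
  by move=> x y; have := GL 1 x y; rewrite !scale1r.
have fD : forall (v : M) s s', (fun s => G (s *: v) : FF) (s + s') =
   (fun s => G (s *: v) : FF) s + (fun s => G (s *: v) : FF) s'.
  by move=> v s s'; rewrite /= scalerDl GD.
exists (fun v => MkN (fD v)); split.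
  move=> a x y; apply: NN_ext; apply/funext => s /=.
  by rewrite scalerDr scalerA GD.
move=> v Pv; apply: NN_ext; apply/funext => s /=.
rewrite GE; last by apply: (smZ HP).
by rewrite /g' (loZ HP Hg) // nf_scale mul1r.
Qed.

Lemma N_abs_pure : abs_pure NN.
Proof.
move=> N' e einj n phi x [y Hy].
pose P0 := fun z : N' => exists a : NN, z = e a.
pose g := fun z : N' => match pselect (P0 z) with
  | left H => proj1_sig (cid H) | right _ => 0 end.
have gE : forall a, g (e a) = a.
  move=> a; rewrite /g; case: pselect => [H|[]]; last by exists a.
  by case: (cid H) => b /= /einj.
have HP : submod P0.
  split; first by exists 0; rewrite linear0.
  by move=> a _ _ [u ->] [w ->]; exists (a *: u + w); rewrite linearP.
have Hg : linon P0 g.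
  by move=> a _ _ [u ->] [w ->]; rewrite -linearP !gE.
have [f [fL fE]] := N_inj HP Hg.
pose F := mklinL fL.
exists (fun l => F (y l)) => i.
have E := congr1 F (Hy i); rewrite linear0 linearD !linear_sum in E.
apply: (eq_trans _ E).
congr (_ + _); apply: eq_bigr => j _; rewrite linearZ /=; congr (_ *: _).
rewrite mklinE; last exact: fL.
by rewrite fE ?gE //; exists (x j).
Qed.

Let iotaD (v : V) s s' : (fun s => (fun t : TT => tchi t (s *: v)) : FF) (s + s') =
  (fun s => (fun t : TT => tchi t (s *: v)) : FF) s +
  (fun s => (fun t : TT => tchi t (s *: v)) : FF) s'.
Proof. by apply/funext => t /=; rewrite scalerDl tchiD. Qed.
Definition iota0 (v : V) : NN := MkN (iotaD v).

Lemma iotaL a x y : iota0 (a *: x + y) = a *: iota0 x + iota0 y.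
Proof.
apply: NN_ext; apply/funext => s; apply/funext => t /=.
by rewrite scalerDr scalerA tchiD.
Qed.

Definition iota : {linear V -> NN} := mklinL iotaL.

Lemma iotaE v s t : nf (iota v) s t = tchi t (s *: v). Proof. by []. Qed.

Lemma iota_ker (HW : submod W) v : iota v = 0 -> W v.
Proof.
move=> iv; apply: contrapT => nWv.
have [chi [chiD chiW chiv]] := cogen (sm0 HW) (@smB _ _ _ HW) nWv.
pose t := MkT chiD chiW.
apply: chiv; have := congr1 (fun a => nf a 1 t) iv.
by rewrite iotaE scale1r.
Qed.

Lemma iota_W (HW : submod W) v : W v -> iota v = 0.
Proof.
move=> Wv; apply: NN_ext; apply/funext => s; apply/funext => t /=.
by rewrite tchiW //; apply: (smZ HW).
Qed.
End Coind.

Lemma zero_submod (R : pzRingType) (V : lmodType R) : submod (fun v : V => v = 0).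
Proof. by split=> // a x y -> ->; rewrite scaler0 addr0. Qed.

Lemma sum_linon (R : pzRingType) (L : lmodType R) (I : R -> Prop) (h : R -> L)
  (ID : forall a b, I a -> I b -> I (a + b)) (I0 : I 0)
  (hD : forall a b, I a -> I b -> h (a + b) = h a + h b) (h0 : h 0 = 0)
  (hM : forall r a, I a -> h (r * a) = r *: h a) (IM : forall r a, I a -> I (r * a))
  n (c g : 'I_n -> R) : (forall i, I (g i)) ->
  I (\sum_i c i * g i) /\ h (\sum_i c i * g i) = \sum_i c i *: h (g i).
Proof.
move=> Ig; apply: (big_rec2 (fun s t => I s /\ h s = t)) => // i s t _ [Is <-].
by split; [apply: ID => //; apply: IM | rewrite hD ?hM //; apply: IM].
Qed.

Lemma noeth_baer (R : pzRingType) (HR : left_noetherian R) (L : lmodType R) :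
  abs_pure L -> baer L.
Proof.
move=> HL I h I0 ID IM hD hM.
have h0 : h 0 = 0 by apply: (addrI (h 0)); rewrite -hD // !addr0.
pose W := fun v : L => v = 0.
pose io := iota W.
have ioinj : injective io.
  move=> v w E; apply/eqP; rewrite -subr_eq0; apply/eqP.
  apply: (iota_ker (zero_submod L)).
  by rewrite linearB /= -/io E subrr.
have [n [g [Ig Igen]]] := HR I (And3 I0 ID IM).
have HI : submod (I : R^o -> Prop).
  by split=> // a x y Ix Iy; apply: ID => //; apply: IM.
have Hio : linon (I : R^o -> Prop) (fun a => io (h a)).
  move=> a x y Ix Iy /=; have Iax : I (a * x) by apply: IM.
  by rewrite hD // hM //; apply: (linearP io).
have [F [FL FE]] := N_inj HI Hio.
pose E := F 1.
have FI : forall a, I a -> io (h a) = a *: E.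
  move=> a Ia; rewrite -FE //; have := FL a 1 0; rewrite /E.
  have -> : a *: (1 : R^o) + 0 = a by rewrite addr0; exact: mulr1.
  move=> ->; have : F 0 = 0.
    by rewrite (FE 0 I0) h0 linear0.
  by move=> ->; rewrite addr0.
pose phi := @PPF R n 1 n (fun i j => (i == j)%:R) (fun i _ => - g i).
have Hsum : forall (V : lmodType R) (x : 'I_n -> V) i,
    \sum_j (i == j)%:R *: x j = x i.
  move=> V x i; rewrite (bigD1 i) //= eqxx scale1r big1 ?addr0 //.
  by move=> j /negbTE; rewrite eq_sym => ->; rewrite scale0r.
have : pp_holds phi (fun j => io (h (g j))).
  exists (fun _ => E) => i /=; rewrite Hsum big_ord1 FI //.
  by rewrite scaleNr subrr.
move/(HL _ io ioinj n phi (fun j => h (g j))) => [y Hy].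
exists (y ord0) => a /Igen [c ->].
have [_ ->] := sum_linon ID I0 hD h0 hM IM c Ig.
rewrite scaler_suml; apply: eq_bigr => i _.
have := Hy i; rewrite /= Hsum big_ord1 scaleNr => /eqP; rewrite subr_eq0 => /eqP ->.
by rewrite scalerA.
Qed.

Lemma split_l m n (a : 'I_m) : fintype.split (lshift n a) = inl a.
Proof. exact: (@unsplitK m n (inl a)). Qed.
Lemma split_r m n (b : 'I_n) : fintype.split (rshift m b) = inr b.
Proof. exact: (@unsplitK m n (inr b)). Qed.

Definition ext0 (R : pzRingType) n (s : 'I_n -> R) : 'I_n.+1 -> R :=
  fun j => if unlift ord0 j is Some j' then s j' else 0.

Lemma noeth_fg (R : pzRingType) (HR : left_noetherian R) n
  (K : ('I_n -> R) -> Prop) : K (fun _ => 0) ->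
  (forall a r r', K r -> K r' -> K (fun j => a * r j + r' j)) ->
  exists p (G : 'I_p -> 'I_n -> R), (forall i, K (G i)) /\
    forall r, K r -> exists c : 'I_p -> R, forall j, r j = \sum_i c i * G i j.
Proof.
elim: n K => [|n IH] K K0 KC.
  exists 0%N, (fun _ _ => 0); split; first by case.
  by move=> r _; exists (fun _ => 0); case.
have KD r r' : K r -> K r' -> K (fun j => r j + r' j).
  by move=> Kr Kr'; have := KC 1 r r' Kr Kr'; under eq_fun do rewrite mul1r.
have KM a r : K r -> K (fun j => a * r j).
  by move=> Kr; have := KC a r _ Kr K0; under eq_fun do rewrite addr0.
have KN r : K r -> K (fun j => - r j).
  by move=> Kr; have := KM (-1) r Kr; under eq_fun do rewrite mulN1r.
pose I := fun a => exists r, K r /\ r ord0 = a.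
have Ilid : left_ideal I.
  split.
  - by exists (fun _ => 0).
  - by move=> a b [r [Kr <-]] [r' [Kr' <-]]; exists (fun j => r j + r' j); split=> //; apply: KD.
  - by move=> a b [r [Kr <-]]; exists (fun j => a * r j); split=> //; apply: KM.
have [q [g [Ig Igen]]] := HR I Ilid.
pose w := fun i => proj1_sig (cid (Ig i)).
have Kw : forall i, K (w i) by move=> i; rewrite /w; case: (cid _) => r [].
have w0 : forall i, w i ord0 = g i by move=> i; rewrite /w; case: (cid _) => r [].
pose K' := fun s : 'I_n -> R => K (ext0 s).
have [p' [G' [KG' Gen']]] : exists p (G : 'I_p -> 'I_n -> R), (forall i, K' (G i)) /\
    forall r, K' r -> exists c : 'I_p -> R, forall j, r j = \sum_i c i * G i j.
  apply: IH.
  - rewrite /K'; suff -> : ext0 (fun _ : 'I_n => 0 : R) = fun _ => 0 by [].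
    by apply/funext => j; rewrite /ext0; case: unliftP.
  - move=> a r r' Kr Kr'; rewrite /K'.
    suff -> : ext0 (fun j => a * r j + r' j) = fun j => a * ext0 r j + ext0 r' j.
      by apply: KC.
    by apply/funext => j; rewrite /ext0; case: unliftP => // _; rewrite mulr0 addr0.
pose Gt := fun i : 'I_(q + p') => match fintype.split i with
  | inl a => w a | inr b => ext0 (G' b) end.
exists (q + p')%N, Gt; split.
  by move=> i; rewrite /Gt; case: fintype.split.
move=> r Kr.
have [c Hc] : exists c : 'I_q -> R, r ord0 = \sum_i c i * g i.
  by apply/Igen; exists r.
pose s := fun j => r j - \sum_i c i * w i j.
have KS : forall (d : 'I_q -> R), K (fun j => \sum_i d i * w i j).
  move=> d; rewrite /(\sum_i _) /=; elim: (index_enum _) => [|x l IHl].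
    by under eq_fun do rewrite big_nil.
  by under eq_fun do rewrite big_cons; apply: KC.
have Ks : K s.
  have := KC (-1) _ r (KS c) Kr.
  by under eq_fun do rewrite mulN1r addrC.
have s0 : s ord0 = 0.
  rewrite /s Hc (_ : \sum_i c i * w i ord0 = \sum_i c i * g i) ?subrr //.
  by apply: eq_bigr => i _; rewrite w0.
have Ks' : K' (fun j' => s (lift ord0 j')).
  rewrite /K'; suff -> : ext0 (fun j' => s (lift ord0 j')) = s by [].
  by apply/funext => j; rewrite /ext0; case: unliftP => [j' ->|->].
have [d Hd] := Gen' _ Ks'.
have sE : forall j, s j = \sum_b d b * ext0 (G' b) j.
  move=> j; case: (unliftP ord0 j) => [j' ->|->].
    by rewrite Hd; apply: eq_bigr => b _; rewrite /ext0 liftK.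
  by rewrite s0 big1 // => b _; rewrite /ext0 unlift_none mulr0.
exists (fun i => match fintype.split i with inl a => c a | inr b => d b end) => j.
rewrite big_split_ord /=.
have -> : r j = \sum_i c i * w i j + s j by rewrite /s addrC subrK.
rewrite sE; congr (_ + _); apply: eq_bigr => i _; rewrite /Gt.
  by rewrite split_l.
by rewrite split_r.
Qed.

Lemma delta_sum (R : pzRingType) (V : lmodType R) n (x : 'I_n -> V) i :
  \sum_j (i == j)%:R *: x j = x i.
Proof.
rewrite (bigD1 i) //= eqxx scale1r big1 ?addr0 //.
by move=> j /negbTE; rewrite eq_sym => ->; rewrite scale0r.
Qed.

Lemma fwd (R : pzRingType) (HR : left_noetherian R) (M : lmodType R) :
  strict_atomic (@abs_pure R) M.
Proof.
move=> n m.
pose K := fun r : 'I_n -> R => \sum_j r j *: m j = 0.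
have K0 : K (fun _ => 0) by rewrite /K big1 // => j _; rewrite scale0r.
have KC : forall a r r', K r -> K r' -> K (fun j => a * r j + r' j).
  move=> a r r'; rewrite /K => Kr Kr'.
  under eq_bigr do rewrite scalerDl -scalerA.
  by rewrite big_split /= -scaler_sumr Kr Kr' scaler0 addr0.
have [p [G [KG Gen]]] := noeth_fg HR K0 KC.
exists (@PPF R n 0 p (fun i j => G i j) (fun _ _ => 0)); split.
  by exists (fun _ => 0) => i /=; rewrite big_ord0 addr0; apply: KG.
move=> L HL c [y Hy].
have Hc : forall i, \sum_j G i j *: c j = 0.
  by move=> i; have := Hy i; rewrite /= big_ord0 addr0.
have wd : forall r r', \sum_j r j *: m j = \sum_j r' j *: m j ->
    \sum_j r j *: c j = \sum_j r' j *: c j.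
  move=> r r' E.
  have : K (fun j => r j - r' j).
    rewrite /K; under eq_bigr do rewrite scalerBl.
    by rewrite sumrB E subrr.
  move/Gen => [e He]; apply/eqP; rewrite -subr_eq0 -sumrB.
  under eq_bigr do rewrite -scalerBl He scaler_suml.
  rewrite exchange_big /= big1 // => i _.
  by under eq_bigr do rewrite -scalerA; rewrite -scaler_sumr Hc scaler0.
pose P0 := fun v : M => exists r, v = \sum_j r j *: m j.
pose g0 := fun v : M => match pselect (P0 v) with
  | left H => \sum_j (proj1_sig (cid H)) j *: c j | right _ => 0 end.
have g0E : forall r, g0 (\sum_j r j *: m j) = \sum_j r j *: c j.
  move=> r; rewrite /g0; case: pselect => [H|[]]; last by exists r.
  by case: (cid H) => r' /= E; apply: wd; rewrite -E.
have comb : forall a r r' (V : lmodType R) (x : 'I_n -> V),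
    a *: (\sum_j r j *: x j) + \sum_j r' j *: x j = \sum_j (a * r j + r' j) *: x j.
  move=> a r r' V x; rewrite scaler_sumr -big_split /=; apply: eq_bigr => j _.
  by rewrite scalerDl scalerA.
have HP : submod P0.
  split; first by exists (fun _ => 0); rewrite big1 // => j _; rewrite scale0r.
  by move=> a _ _ [r ->] [r' ->]; exists (fun j => a * r j + r' j); rewrite comb.
have Hg : linon P0 g0.
  by move=> a _ _ [r ->] [r' ->]; rewrite comb !g0E comb.
have [f [fL fE]] := rext (noeth_baer HR HL) HP Hg.
exists (mklinL fL) => j; rewrite mklinE.
rewrite -(delta_sum m j) fE; last by exists (fun k => (j == k)%:R).
by rewrite g0E delta_sum.
Qed.

Section Cyc.
Variables (R : pzRingType) (N : lmodType R) (c : N).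
Record Cyc := MkC { cv : N; cvP : exists r : R, cv = r *: c }.
HB.instance Definition _ := gen_eqMixin Cyc.
HB.instance Definition _ := gen_choiceMixin Cyc.
Lemma Cyc_ext (a b : Cyc) : cv a = cv b -> a = b.
Proof.
case: a => fa Ha; case: b => fb Hb /= E; subst fb.
by rewrite (Prop_irrelevance Ha Hb).
Qed.
Let czP : exists r : R, (0 : N) = r *: c. Proof. by exists 0; rewrite scale0r. Qed.
Definition czero := MkC czP.
Let caP (a b : Cyc) : exists r : R, cv a + cv b = r *: c.
Proof.
case: a b => ca [r Ea] [cb [r' Eb]] /=; exists (r + r').
by rewrite Ea Eb scalerDl.
Qed.
Definition cadd a b := MkC (caP a b).
Let coP (a : Cyc) : exists r : R, - cv a = r *: c.
Proof. by case: a => ca [r Ea] /=; exists (- r); rewrite Ea scaleNr. Qed.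
Definition copp a := MkC (coP a).
Let caA : associative cadd. Proof. by move=> a b d; apply: Cyc_ext => /=; rewrite addrA. Qed.
Let caC : commutative cadd. Proof. by move=> a b; apply: Cyc_ext => /=; rewrite addrC. Qed.
Let ca0 : left_id czero cadd. Proof. by move=> a; apply: Cyc_ext => /=; rewrite add0r. Qed.
Let caN : left_inverse czero copp cadd. Proof. by move=> a; apply: Cyc_ext => /=; rewrite addNr. Qed.
HB.instance Definition _ := GRing.isZmodule.Build Cyc caA caC ca0 caN.
Let csP (r : R) (a : Cyc) : exists r' : R, r *: cv a = r' *: c.
Proof. by case: a => ca [s Ea] /=; exists (r * s); rewrite Ea scalerA. Qed.
Definition cscale r a := MkC (csP r a).
Let csA a b v : cscale a (cscale b v) = cscale (a * b) v.
Proof. by apply: Cyc_ext => /=; rewrite scalerA. Qed.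
Let cs1 : left_id 1 cscale. Proof. by move=> v; apply: Cyc_ext => /=; rewrite scale1r. Qed.
Let csDr : right_distributive cscale +%R.
Proof. by move=> a u v; apply: Cyc_ext => /=; rewrite scalerDr. Qed.
Let csDl v : {morph cscale^~ v : a b / a + b}.
Proof. by move=> a b; apply: Cyc_ext => /=; rewrite scalerDl. Qed.
HB.instance Definition _ := GRing.Zmodule_isLmodule.Build R Cyc csA cs1 csDr csDl.
Lemma cvL a (u v : Cyc) : cv (a *: u + v) = a *: cv u + cv v. Proof. by []. Qed.
Lemma cv0 : cv 0 = 0. Proof. by []. Qed.
End Cyc.

Lemma bwd (R : pzRingType) :
  (forall M : lmodType R, strict_atomic (@abs_pure R) M) -> left_noetherian R.
Proof.
move=> HM I [I0 ID IM].
have HI : submod (I : R^o -> Prop).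
  by split=> // a x y Ix Iy; apply: ID => //; apply: IM.
have iotaZ : forall (W : R^o -> Prop) (r : R), iota W (r : R^o) = r *: iota W (1 : R^o).
  move=> W r; rewrite -linearZ /=; congr (iota W _).
  by rewrite /GRing.scale /= mulr1.
pose c := @iota R R^o I 1.
have c1 : exists r : R, c = r *: c by exists 1; rewrite scale1r.
pose x0 := MkC c1.
pose CV := mklinL (@cvL R _ c).
have [phi [[y Hy] Hfree]] := HM _ 1%N (fun _ => x0).
pose yh := fun l => proj1_sig (cid (cvP (y l))).
have yhE : forall l, cv (y l) = yh l *: c by move=> l; rewrite /yh; case: (cid _).
pose z := fun i => pp_A phi i ord0 + \sum_l pp_B phi i l * yh l.
have zc : forall i, z i *: c = 0.
  move=> i; have := congr1 CV (Hy i); rewrite linear0 linearD !linear_sum => <-.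
  rewrite big_ord1 /z scalerDl scaler_suml; congr (_ + _).
  by apply: eq_bigr => l _; rewrite linearZ /CV mklinE yhE -scalerA.
have Iz : forall i, I (z i).
  by move=> i; apply: (iota_ker HI); rewrite iotaZ; apply: zc.
pose J := fun a => exists d : 'I_(pp_m phi) -> R, a = \sum_i d i * z i.
have Jsum : forall (d : 'I_(pp_m phi) -> R), I (\sum_i d i * z i).
  move=> d; apply: (big_rec (fun t => I t)) => // i t _ It.
  by apply: ID => //; apply: IM.
have HJ : submod (J : R^o -> Prop).
  split; first by exists (fun _ => 0); rewrite big1 // => i _; rewrite mul0r.
  move=> a _ _ [d ->] [d' ->]; exists (fun i => a * d i + d' i).
  rewrite /GRing.scale /= mulr_sumr -big_split /=; apply: eq_bigr => i _.
  by rewrite mulrDl mulrA.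
pose cJ := @iota R R^o J 1.
have cJphi : pp_holds phi (fun _ : 'I_1 => cJ).
  exists (fun l => yh l *: cJ) => i.
  rewrite big_ord1; under eq_bigr do rewrite scalerA.
  rewrite -scaler_suml -scalerDl -/(z i) /cJ -iotaZ.
  apply: (iota_W HJ); exists (fun k => (i == k)%:R).
  rewrite (bigD1 i) //= eqxx mul1r big1 ?addr0 // => k /negbTE.
  by rewrite eq_sym => ->; rewrite mul0r.
have [f Hf] := Hfree _ (@N_abs_pure R R^o J) _ cJphi.
exists (pp_m phi), z; split => // a; split; last by move=> [d ->].
move=> Ia; have ax0 : a *: x0 = 0.
  apply: Cyc_ext => /=; rewrite /c -iotaZ; exact: (iota_W HI).
have := congr1 f ax0; rewrite linearZ (Hf ord0) (linear0 f) /cJ => E.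
by apply: (iota_ker HJ); rewrite iotaZ; exact: E.
Qed.

Lemma int_noeth : left_noetherian int.
Proof.
move=> I [I0 ID IM].
case: (int_ideal I0 ID IM) => [I00|[o [o0 Io oI]]].
  exists 0%N, (fun _ => 0); split; first by case.
  move=> x; split; first by move/I00 ->; exists (fun _ => 0); rewrite big_ord0.
  by move=> [c ->]; rewrite big_ord0.
exists 1%N, (fun _ => o%:Z); split=> // x; split.
  by move/oI => [q ->]; exists (fun _ => q); rewrite big_ord1.
by move=> [d ->]; rewrite big_ord1; apply: IM.
Qed.

Theorem proposition2p14 (R : pzRingType) :
  (left_noetherian R <->
     forall M : lmodType R, strict_atomic (@abs_pure R) M) /\
  (forall G : lmodType int, strict_atomic (@abs_pure int) G).
Proof.
split; first by split; [move=> HR M; apply: fwd | apply: bwd].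
by move=> G; apply: fwd; apply: int_noeth.
Qed.
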